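(* Let $\mathcal{R}$ be a commutative ring with unity, $P$ a locally finite poset in which every maximal chain has at least three elements, and $b$ an additive biderivation of $I(P,\mathcal{R})$. For $x\in P$: (1) if $x$ is a minimal element of $P$, then $b(e_{xx},e_{xx})=\sum_{x<y,\ y\text{ maximal in }P}b_{xy}(e_{xx},e_{xx})\,e_{xy}$; (2) if $x$ is a maximal element of $P$, then $b(e_{xx},e_{xx})=\sum_{y<x,\ y\text{ minimal in }P}b_{yx}(e_{xx},e_{xx})\,e_{yx}$; (3) if $x$ is neither minimal nor maximal, then $b(e_{xx},e_{xx})=0$.
   Context: $I(P,\mathcal{R})$ is the incidence algebra: functions $f:P\times P\to\mathcal{R}$ with $f(x,y)=0$ unless $x\le y$, with product $(fg)(x,y)=\sum_{x\le z\le y}f(x,z)g(z,y)$; $e_{xy}$ ($x\le y$) is the function equal to $1$ at $(x,y)$ and $0$ elsewhere. An additive biderivation is a map $b$ of two arguments, additive in each, with $b(\alpha\beta,\gamma)=\alpha b(\beta,\gamma)+b(\alpha,\gamma)\beta$ and $b(\alpha,\beta\gamma)=\beta b(\alpha,\gamma)+b(\alpha,\beta)\gamma$. Write $b_{pq}(\alpha,\beta)=b(\alpha,\beta)(p,q)$. A maximal chain is a totally ordered subset to which no element of $P$ can be added keeping it totally ordered. $x$ is minimal (maximal) if no $y$ satisfies $y<x$ ($x<y$). *)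

(* Defs.v *)
From HB Require Import structures.
From mathcomp Require Import all_boot all_order all_algebra.
From Stdlib Require Import ClassicalEpsilon.
Set Implicit Arguments. Unset Strict Implicit. Unset Printing Implicit Defensive.
Import Order.Theory GRing.Theory.

Section Incidence.
Context {d : Order.disp_t} (T : porderType d) (R : pzRingType).

(* Local finiteness: an enumeration of every interval [x,y]. *)
Definition interval_enum (itv : T -> T -> seq T) : Prop :=
  forall x y, uniq (itv x y) /\ (forall z, (z \in itv x y) = (x <= z <= y)%O).

Record incidence := Incidence {
  inc_fun :> T -> T -> R;
  inc_supp : forall x y, ~~ (x <= y)%O -> inc_fun x y = 0%R }.

Lemma inc_add_supp (f g : incidence) x y :
  ~~ (x <= y)%O -> (f x y + g x y = 0)%R.
Proof. by move=> h; rewrite !inc_supp // addr0. Qed.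
Definition inc_add (f g : incidence) : incidence :=
  Incidence (@inc_add_supp f g).

Lemma inc_mul_supp (itv : T -> T -> seq T) (f g : incidence) x y :
  ~~ (x <= y)%O ->
  (if (x <= y)%O then \sum_(z <- itv x y) f x z * g z y else 0)%R = 0%R.
Proof. by move=> /negbTE ->. Qed.
Definition inc_mul (itv : T -> T -> seq T) (f g : incidence) : incidence :=
  Incidence (@inc_mul_supp itv f g).

Lemma inc_e_supp (a b : T) x y :
  ~~ (x <= y)%O -> (if [&& x == a, y == b & (x <= y)%O] then 1 else 0 : R)%R = 0%R.
Proof. by move=> /negbTE ->; rewrite !andbF. Qed.
(* e_{ab} (meaningful for a <= b): 1 at (a,b), 0 elsewhere. *)
Definition inc_e (a b : T) : incidence := Incidence (@inc_e_supp a b).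

Definition biderivation (itv : T -> T -> seq T)
  (b : incidence -> incidence -> incidence) : Prop :=
  [/\ (forall a1 a2 c, b (inc_add a1 a2) c = inc_add (b a1 c) (b a2 c)),
      (forall a c1 c2, b a (inc_add c1 c2) = inc_add (b a c1) (b a c2)),
      (forall a be ga, b (inc_mul itv a be) ga =
          inc_add (inc_mul itv a (b be ga)) (inc_mul itv (b a ga) be)) &
      (forall a be ga, b a (inc_mul itv be ga) =
          inc_add (inc_mul itv be (b a ga)) (inc_mul itv (b a be) ga))].

Definition is_chain (C : T -> Prop) : Prop :=
  forall x y, C x -> C y -> (x <= y)%O \/ (y <= x)%O.
Definition maximal_chain (C : T -> Prop) : Prop :=
  is_chain C /\ forall z, ~ C z -> ~ is_chain (fun w => C w \/ w = z).
Definition chains_ge3 : Prop :=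
  forall C, maximal_chain C ->
    exists x y z, [/\ C x, C y, C z & [/\ x <> y, y <> z & x <> z]].

Definition minimal_elt (x : T) : Prop := forall y, ~ (y < x)%O.
Definition maximal_elt (x : T) : Prop := forall y, ~ (x < y)%O.

(* The (pointwise, possibly infinite) sum  Σ_{(p,q) ∈ S, p <= q} c(p,q) e_{pq}
   as a function P x P -> R; it is well defined since the e_{pq} have
   pairwise disjoint supports. *)
Definition sum_e (S : T -> T -> Prop) (c : T -> T -> R) : T -> T -> R :=
  fun p q => if excluded_middle_informative (S p q /\ (p <= q)%O)
             then c p q else 0%R.

End Incidence.

(* Main.v *)
Require Import Defs.
From HB Require Import structures.
From mathcomp Require Import all_boot all_order all_algebra.
From mathcomp Require Import ring.
From Stdlib Require Import ProofIrrelevance FunctionalExtensionality ClassicalEpsilon.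
Set Implicit Arguments. Unset Strict Implicit. Unset Printing Implicit Defensive.
Import Order.Theory GRing.Theory.
Local Open Scope ring_scope.

Section S.
Context {d : Order.disp_t} (T : porderType d) (R : comPzRingType)
  (itv : T -> T -> seq T) (hitv : interval_enum itv).

Lemma sum_one (s : seq T) (c : T) (F : T -> R) : uniq s ->
  \sum_(z <- s) (if z == c then F z else 0) = if c \in s then F c else 0.
Proof.
move=> us; case: ifP => cs.
  rewrite (bigD1_seq c) //= eqxx big1 ?addr0 // => i /negbTE ->; done.
rewrite big1_seq // => i /= iin; case: eqP => // ei; by rewrite -ei iin in cs.
Qed.

Lemma mul_eL (a c : T) (f : incidence T R) p q :
  inc_mul itv (inc_e R a c) f p q =
    if (p == a) && (a <= c)%O then f c q else 0.
Proof.
rewrite /inc_mul /=; case: ifP => pq.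
  have -> : \sum_(z <- itv p q) (if [&& p == a, z == c & (p <= z)%O] then 1 else 0) * f z q
    = \sum_(z <- itv p q) (if z == c then (if (p == a) && (a <= c)%O then f z q else 0) else 0).
    apply: eq_bigr => z _; case: (eqVneq z c) => [->|]; last by rewrite !andbF mul0r.
    case: (eqVneq p a) => [->|] /=; last by rewrite mul0r.
    by case: ifP; rewrite ?mul1r ?mul0r.
  case: (hitv p q) => u hm; rewrite sum_one // hm.
  case: (eqVneq p a) => [->|] /=; last by case: ifP.
  case ac: (a <= c)%O => //=.
  by case: ifP => // cq; rewrite inc_supp // cq.
case: (eqVneq p a) => [ea|] //=; case ac: (a <= c)%O => //=.
rewrite inc_supp //; apply/negP => cq; move: pq; by rewrite ea (le_trans ac cq).
Qed.

Lemma mul_eR (a c : T) (f : incidence T R) p q :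
  inc_mul itv f (inc_e R a c) p q =
    if (q == c) && (a <= c)%O then f p a else 0.
Proof.
rewrite /inc_mul /=; case: ifP => pq.
  have -> : \sum_(z <- itv p q) f p z * (if [&& z == a, q == c & (z <= q)%O] then 1 else 0)
    = \sum_(z <- itv p q) (if z == a then (if (q == c) && (a <= c)%O then f p z else 0) else 0).
    apply: eq_bigr => z _; case: (eqVneq z a) => [->|] /=; last by rewrite mulr0.
    case: (eqVneq q c) => [->|] /=; last by rewrite mulr0.
    by case: ifP; rewrite ?mulr1 ?mulr0.
  case: (hitv p q) => u hm; rewrite sum_one // hm.
  case: (eqVneq q c) => [->|] /=; last by case: ifP.
  case ac: (a <= c)%O => /=; last by case: ifP.
  by case: ifP => //; rewrite andbT => cq; rewrite inc_supp // cq.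
case: (eqVneq q c) => [ea|] //=; case ac: (a <= c)%O => //=.
rewrite inc_supp //; apply/negP => cq; move: pq; by rewrite ea (le_trans cq ac).
Qed.

Lemma cancel3 (a c dd z : R) : a + c + dd = a + dd + (c + z) -> z = 0.
Proof. move=> h; have -> : z = (a + dd + (c + z)) - (a + c + dd) by ring. by rewrite -h subrr. Qed.

Lemma cancel4 (y u w z : R) : y + (u + w) = z + u + (y + w) -> z = 0.
Proof. move=> h; have -> : z = (z + u + (y + w)) - (y + (u + w)) by ring. by rewrite -h subrr. Qed.

Lemma inc_addE (f g : incidence T R) p q : inc_add f g p q = f p q + g p q.
Proof. by []. Qed.

Lemma inc_ext (f g : incidence T R) : (forall p q, f p q = g p q) -> f = g.
Proof.
case: f g => f hf [g hg] /= h.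
have efg : f = g by apply: functional_extensionality => p; apply: functional_extensionality.
subst g; f_equal; apply: proof_irrelevance.
Qed.
End S.
Section M.
Context {d : Order.disp_t} (T : porderType d) (R : comPzRingType)
  (itv : T -> T -> seq T) (hitv : interval_enum itv)
  (b : incidence T R -> incidence T R -> incidence T R)
  (hb : biderivation itv b) (x : T).

Local Notation e := (inc_e R x x).
Local Notation B := (b e e).

Lemma rowz p q r : (q < r)%O -> B p q = 0.
Proof.
move=> qr; case: hb => _ _ hL hR.
set u := inc_e R q r; set v := inc_e R r r.
have h1 := hL e u (inc_mul itv e v).
have h2 := hR (inc_mul itv e u) e v.
rewrite (hR u e v) (hR e e v) in h1.
rewrite (hL e u v) (hL e u e) in h2.
have := congr1 (fun f => inc_fun f p r) (etrans (esym h1) h2).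
move=> H; cbv beta in H; move: H.
rewrite !inc_addE !(mul_eL hitv) !(mul_eR hitv) !inc_addE !(mul_eL hitv) !(mul_eR hitv).
rewrite !eqxx !lexx (ltW qr) (lt_eqF qr) /= !addr0.
case: (p == x) => /=; first exact: cancel3.
by rewrite !add0r.
Qed.
Lemma colz s p q : (s < p)%O -> B p q = 0.
Proof.
move=> sp; case: hb => _ _ hL hR.
set u := inc_e R s p; set v := inc_e R s s.
have h1 := hL u e (inc_mul itv v e).
have h2 := hR (inc_mul itv u e) v e.
rewrite (hR e v e) (hR u v e) in h1.
rewrite (hL u e e) (hL u e v) in h2.
have := congr1 (fun f => inc_fun f s q) (etrans (esym h1) h2).
move=> H; cbv beta in H; move: H.
rewrite !inc_addE !(mul_eL hitv) !(mul_eR hitv) !inc_addE !(mul_eL hitv) !(mul_eR hitv).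
rewrite !eqxx !lexx (ltW sp) (gt_eqF sp) /= add0r.
case: (q == x) => /=; first exact: cancel4.
by rewrite !addr0.
Qed.
Lemma ee : inc_mul itv e e = e.
Proof.
apply: inc_ext => p q; rewrite (mul_eL hitv) lexx andbT /=.
by case: (eqVneq p x) => [->|] /=; rewrite ?eqxx.
Qed.

Lemma suppB p q :
  B p q = (if p == x then B x q else 0) + (if q == x then B p x else 0).
Proof.
case: hb => _ _ hL _.
have := congr1 (fun f => inc_fun f p q) (hL e e e).
rewrite ee => H; cbv beta in H; rewrite {1}H inc_addE (mul_eL hitv) (mul_eR hitv).
by rewrite lexx !andbT.
Qed.

Lemma Bxx : B x x = 0.
Proof.
have h := suppB x x; rewrite eqxx in h.
have -> : B x x = (B x x + B x x) - B x x by ring.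
by rewrite -h subrr.
Qed.

Lemma nzB p q : B p q <> 0 ->
  [/\ minimal_elt p, maximal_elt q &
      (p = x /\ (x < q)%O) \/ (q = x /\ (p < x)%O)].
Proof.
move=> nz; split.
- by move=> s sp; apply: nz; exact: (@colz s p q sp).
- by move=> r qr; apply: nz; exact: (@rowz p q r qr).
case: (eqVneq p x) => [ep|np]; case: (eqVneq q x) => [eq|nq].
- by case: nz; rewrite ep eq Bxx.
- left; split => //; rewrite lt_def nq /=.
  case xq: (x <= q)%O => //; case: nz; apply: inc_supp; by rewrite ep xq.
- right; split => //; rewrite lt_def eq_sym np /=.
  case xq: (p <= x)%O => //; case: nz; apply: inc_supp; by rewrite eq xq.
- by case: nz; rewrite suppB (negbTE np) (negbTE nq) addr0.
Qed.
End M.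

Local Close Scope ring_scope.

Theorem mainTheorem11 {d : Order.disp_t} (T : porderType d) (R : comPzRingType)
  (itv : T -> T -> seq T) (hitv : interval_enum itv)
  (hch : chains_ge3 T)
  (b : incidence T R -> incidence T R -> incidence T R)
  (hb : biderivation itv b) (x : T) :
  let bxx := b (@inc_e _ T R x x) (@inc_e _ T R x x) in
  [/\ minimal_elt x ->
        inc_fun bxx = sum_e (fun p q => p = x /\ (x < q)%O /\ maximal_elt q)
                            (fun p q => inc_fun bxx p q),
      maximal_elt x ->
        inc_fun bxx = sum_e (fun p q => q = x /\ (p < x)%O /\ minimal_elt p)
                            (fun p q => inc_fun bxx p q) &
      ~ minimal_elt x -> ~ maximal_elt x ->
        inc_fun bxx = (fun _ _ => 0%R)].
Proof.
move=> bxx.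
have NZ := @nzB d T R itv hitv b hb x.
split.
- move=> mx; apply: functional_extensionality => p; apply: functional_extensionality => q.
  rewrite /sum_e; case: excluded_middle_informative => // hS /=.
  case: (eqVneq (bxx p q) 0%R) => [->//|/eqP nz].
  have [mp Mq [[ep xq]|[eq px]]] := NZ p q nz.
    by case: hS; split; [split => //; split | rewrite ep; apply: ltW].
  by case: (mx p px).
- move=> mx; apply: functional_extensionality => p; apply: functional_extensionality => q.
  rewrite /sum_e; case: excluded_middle_informative => // hS /=.
  case: (eqVneq (bxx p q) 0%R) => [->//|/eqP nz].
  have [mp Mq [[ep xq]|[eq px]]] := NZ p q nz.
    by case: (mx q xq).
  by case: hS; split; [split => //; split | rewrite eq; apply: ltW].
- move=> nmin nmax; apply: functional_extensionality => p; apply: functional_extensionality => q.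
  case: (eqVneq (bxx p q) 0%R) => [->//|/eqP nz].
  have [mp Mq [[ep _]|[eq _]]] := NZ p q nz.
    by case: nmin; rewrite -ep.
  by case: nmax; rewrite -eq.
Qed.
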